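(* Let $\mathbb{X}^1,\dots,\mathbb{X}^N$ be filtered processes, $\pi\in{\rm cpl}_{\rm mc}(\mathbb{X}^1,\dots,\mathbb{X}^N)$ and $I\subseteq\{1,\dots,N\}$ nonempty. Then ${\rm proj}^I_\#\pi\in{\rm cpl}_{\rm mc}((\mathbb{X}^i)_{i\in I})$, where ${\rm proj}^I:\prod_{i=1}^N\Omega^i\to\prod_{i\in I}\Omega^i$ is the coordinate projection.
   Context: Fix positive integers $T,N$. A filtered process is $\mathbb{X}=(\Omega,{\cal F},\mathbb{F},\mathbb{P},X)$ with $\Omega=\prod_{t=1}^T\Omega_t$ ($\Omega_t$ Polish), $\mathbb{F}=({\cal F}_t)_{t=1}^T$ the canonical filtration (${\cal F}_t$ generated by $\omega_{1:t}$, ${\cal F}_0$ trivial), ${\cal F}={\cal F}_T$, and $X$ an adapted process. For a finite family $(\mathbb{X}^i)_{i\in J}$, $\mathbb{X}^i=(\Omega^i,{\cal F}^i,\mathbb{F}^i,\mathbb{P}^i,X^i)$, write for $v\in\{0,\dots,T\}^J$ $\overline{\cal F}_v=\bigotimes_{i\in J}{\cal F}^i_{v_i}$, $\overline{\cal F}_t=\bigotimes_{i\in J}{\cal F}^i_t$, and $e_i$ for unit vectors. ${\rm cpl}_{\rm mc}((\mathbb{X}^i)_{i\in J})$ is the set of probabilities on $\prod_{i\in J}\Omega^i$ with marginals $\mathbb{P}^i$ such that for all $t\in\{1,\dots,T\}$ and $i\in J$, under $\pi$, $\overline{\cal F}_{Te_i}$ is conditionally independent of $\overline{\cal F}_t$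 given $\overline{\cal F}_{te_i}$. *)

(* Defs.v *)
From HB Require Import structures.
From mathcomp Require Import all_boot all_order all_algebra.
From mathcomp Require Import all_classical all_reals all_analysis.
Unset Printing Implicit Defensive.
Import Order.TTheory GRing.Theory Num.Theory.
Import numFieldNormedType.Exports.
Local Open Scope classical_set_scope.
Local Open Scope ring_scope.

Definition polish (R : realType) (S : topologicalType) : Prop :=
  (exists D : set S, countable D /\ closure D = setT) /\
  exists d : S -> S -> R,
    [/\ (forall x y, d x y = 0 <-> x = y),
        (forall x y, d x y = d y x),
        (forall x y z, d x z <= d x y + d y z),
        (forall U : set S, open U <->
           (forall x, U x -> exists2 e : R, 0 < e & [set y | d x y < e] `<=` U))
      & (forall u : nat -> S,
           (forall e : R, 0 < e -> exists M : nat, forall m n : nat,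
               (M <= m)%N -> (M <= n)%N -> d (u m) (u n) < e) ->
           exists l : S, u @ \oo --> l)].

Definition borel_sets {S : topologicalType} : set (set S) := <<s open >>.

Definition dprod {K : Type} (F : K -> pointedType) := forall k, F k.
HB.instance Definition _ (K : Type) (F : K -> pointedType) :=
  gen_eqMixin (dprod F).
HB.instance Definition _ (K : Type) (F : K -> pointedType) :=
  gen_choiceMixin (dprod F).
HB.instance Definition _ (K : Type) (F : K -> pointedType) :=
  isPointed.Build (dprod F) (fun k => point).

(* Omega = prod_{t=1}^T Omega_t; the coordinate s : 'I_T is omega_{s+1}. *)
Definition path_space {T : nat} (Om : 'I_T -> ptopologicalType) : pointedType :=
  dprod Om.

(* Generators of the canonical filtration F_t = sigma(omega_{1:t}),
   t in {0,..,T}: preimages of Borel sets under omega |-> omega_{s+1}, s < t. *)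
Definition filt_gen {T : nat} (Om : 'I_T -> ptopologicalType) (t : nat)
  : set (set (path_space Om)) :=
  [set S | exists (s : 'I_T) (B : set (Om s)),
     [/\ (s < t)%N, borel_sets B & S = [set w : path_space Om | B (w s)]]].

Definition filt {T : nat} (Om : 'I_T -> ptopologicalType) (t : nat)
  : set (set (path_space Om)) := <<s (filt_gen Om t) >>.

Definition proc_space {T : nat} (Om : 'I_T -> ptopologicalType) :=
  g_sigma_algebraType (filt_gen Om T).

Definition joint_pt {T : nat} {J : finType} (Om : J -> 'I_T -> ptopologicalType)
  : pointedType := dprod (fun j => path_space (Om j)).

(* overline F_v = tensor_{j in J} F^j_{v_j}: the product sigma-algebra,
   generated by the sets {omega | omega^j in A}, A in F^j_{v_j}. *)
Definition Fbar {T : nat} {J : finType} (Om : J -> 'I_T -> ptopologicalType)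
  (v : J -> nat) : set (set (joint_pt Om)) :=
  <<s [set S | exists (j : J) (A : set (path_space (Om j))),
         filt (Om j) (v j) A /\ S = [set w : joint_pt Om | A (w j)]] >>.

Definition joint_space {T : nat} {J : finType} (Om : J -> 'I_T -> ptopologicalType) :=
  g_sigma_algebraType
    [set S | exists (j : J) (A : set (path_space (Om j))),
         filt (Om j) T A /\ S = [set w : joint_pt Om | A (w j)]].

Definition unitv {J : finType} (i : J) (t : nat) : J -> nat :=
  fun j => if j == i then t else 0%N.

Section condindep.
Context {R : realType} {d : measure_display} {X : measurableType d}.

Definition cond_prob (P : probability X R) (G : set (set X)) (a : set X)
  (f : X -> R) : Prop :=
  (forall Y : set R, measurable Y -> G (f @^-1` Y)) /\
  (forall g, G g -> (\int[P]_(x in g) (f x)%:E = P (a `&` g))%E).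

(* A and B are conditionally independent given G under P:
   P(a /\ b | G) = P(a | G) P(b | G) a.s. for all a in A, b in B. *)
Definition cond_indep (P : probability X R) (A B G : set (set X)) : Prop :=
  forall a b, A a -> B b ->
    exists fa fb : X -> R,
      [/\ cond_prob P G a fa, cond_prob P G b fb &
          forall g, G g ->
            (\int[P]_(x in g) (fa x * fb x)%:E = P (a `&` b `&` g))%E].
End condindep.

Definition cpl_mc {R : realType} {T : nat} {J : finType}
  {Om : J -> 'I_T -> ptopologicalType}
  (P : forall j : J, probability (proc_space (Om j)) R)
  (pi : probability (joint_space Om) R) : Prop :=
  (forall (j : J) (A : set (proc_space (Om j))), measurable A ->
     pi [set w : joint_space Om | A (w j)] = P j A) /\
  (forall (t : nat) (i : J), (1 <= t <= T)%N ->
     cond_indep pi (Fbar Om (unitv i T)) (Fbar Om (fun _ => t))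
                   (Fbar Om (unitv i t))).

Definition proj_sub {T N : nat} (Om : 'I_N -> 'I_T -> ptopologicalType)
  (I : {set 'I_N}) (w : joint_space Om)
  : joint_space (fun j : {i : 'I_N | i \in I} => Om (val j)) :=
  fun j => w (val j).

(* Main.v *)
Require Import Defs.
From HB Require Import structures.
From mathcomp Require Import all_boot all_order all_algebra.
From mathcomp Require Import all_classical all_reals all_analysis.
From mathcomp Require Import measurable_realfun.
Import Order.TTheory GRing.Theory Num.Theory.
Local Open Scope classical_set_scope.
Local Open Scope ring_scope.
Lemma sig_pre (A B : Type) (f : A -> B) (G : set (set B)) (H : set (set A)) :
  (forall S, G S -> <<s H >> (f @^-1` S)) ->
  forall S, <<s G >> S -> <<s H >> (f @^-1` S).
Proof.
move=> hG S; apply: (@smallest_sub _ (sigma_algebra setT) G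
   [set S | <<s H >> (f @^-1` S)]) => //.
split=> /=.
- by rewrite preimage_set0; exact: sigma_algebra0.
- by move=> X hX; rewrite setTD -preimage_setC -setTD; exact: sigma_algebraCD.
- by move=> F hF; rewrite preimage_bigcup; exact: sigma_algebra_bigcup.
Qed.

Lemma sig_inv (A : Type) (r : A -> A -> Prop) (G : set (set A)) :
  (forall x y, r x y -> r y x) ->
  (forall S, G S -> forall x y, r x y -> S x -> S y) ->
  forall S, <<s G >> S -> forall x y, r x y -> S x -> S y.
Proof.
move=> rs hG S; apply: (@smallest_sub _ (sigma_algebra setT) G
   [set S | forall x y, r x y -> S x -> S y]) => //.
split=> /=.
- by [].
- move=> X hX x y rxy [_ nXx]; split => // Xy; apply: nXx; exact: (hX y x (rs _ _ rxy)).
- move=> F hF x y rxy [n _ Fx]; exists n => //; exact: (hF n x y rxy).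
Qed.

Lemma filt0_const {T : nat} (Om : 'I_T -> ptopologicalType) (A : set (path_space Om)) :
  filt Om 0 A -> forall x y, A x -> A y.
Proof.
move=> hA x y; apply: (@sig_inv _ (fun _ _ => True) (filt_gen Om 0)) => //.
by move=> S [s [B [+ _ _]]].
Qed.

Lemma filt_mono {T : nat} (Om : 'I_T -> ptopologicalType) (s t : nat) :
  (s <= t)%N -> filt Om s `<=` filt Om t.
Proof.
move=> st; apply: sub_sigma_algebra2 => S [u [B [us hB ->]]].
exists u, B; split => //; exact: leq_trans us st.
Qed.

Lemma Fbar_meas {T : nat} {J : finType} (Om : J -> 'I_T -> ptopologicalType)
  (v : J -> nat) : (forall j, (v j <= T)%N) ->
  forall S, Fbar Om v S -> measurable (S : set (joint_space Om)).
Proof.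
move=> hv; apply: sub_sigma_algebra2 => S [j [A [hA ->]]].
exists j, A; split => //; exact: filt_mono (hv j) _ hA.
Qed.

Lemma Fbar_inv {T : nat} {J : finType} (Om : J -> 'I_T -> ptopologicalType)
  (i : J) (t : nat) S : Fbar Om (unitv i t) S ->
  forall w w' : joint_pt Om, w i = w' i -> S w -> S w'.
Proof.
move=> hS w w'; apply: (@sig_inv _ (fun w w' : joint_pt Om => w i = w' i) _ _ _ S hS).
  by move=> x y ->.
move=> S' [j [A [hA ->]]] x y /= xy.
case: (eqVneq j i) => [eji|nji].
  subst j; by rewrite xy.
have hA0 : filt (Om j) 0 A by move: hA; rewrite /unitv (negbTE nji).
move=> /= Ax.
exact: (filt0_const _ _ hA0 _ _ Ax).
Qed.
Section Ext.
Variables (T N : nat) (Om : 'I_N -> 'I_T -> ptopologicalType) (I : {set 'I_N}).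
Local Notation J := {i : 'I_N | i \in I}.
Local Notation Omj := (fun j : J => Om (val j)).

Definition extw (w' : joint_pt Omj) : joint_pt Om :=
  fun k => (if k \in I as b return (k \in I = b -> path_space (Om k))
            then fun H => w' (exist _ k H) else fun _ => point) (erefl (k \in I)).

Lemma extw_in k (H : k \in I) w' : extw w' k = w' (exist _ k H).
Proof.
rewrite /extw; move: (erefl (k \in I)).
rewrite {2 3}H => H'; by rewrite (eq_irrelevance H' H).
Qed.

Lemma extw_notin k (H : k \notin I) w' : extw w' k = point.
Proof.
rewrite /extw; move: (erefl (k \in I)).
by rewrite {2 3}(negbTE H).
Qed.

Lemma extw_p (w : joint_pt Om) (j : J) : extw (proj_sub Om I w) (val j) = w (val j).
Proof. by case: j => k H /=; rewrite (extw_in k H). Qed.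

Lemma pre_p (v : J -> nat) (v' : 'I_N -> nat) :
  (forall j, v j = v' (val j)) ->
  forall S, Fbar Omj v S -> Fbar Om v' (proj_sub Om I @^-1` S).
Proof.
move=> hv; apply: sig_pre => S [j [A [hA ->]]].
apply: sub_sigma_algebra; exists (val j), A; split => //.
by rewrite -hv.
Qed.

Lemma pre_ext (v : J -> nat) (v' : 'I_N -> nat) :
  (forall j, v j = v' (val j)) ->
  forall S, Fbar Om v' S -> Fbar Omj v (extw @^-1` S).
Proof.
move=> hv; apply: sig_pre => S [k [A [hA ->]]].
case: (boolP (k \in I)) => [H|H].
  apply: sub_sigma_algebra; exists (exist _ k H), A; split.
    by rewrite hv.
  by apply/funext => w' /=; rewrite (extw_in k H).
have -> : extw @^-1` [set w | A (w k)] = if `[< A point >] then setT else set0.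
  apply/funext => w' /=; rewrite (extw_notin k H).
  by case: (asboolP (A point)) => hp; apply/propext; split.
case: ifP => _; last exact: sigma_algebra0.
rewrite -{2}[setT]setD0; apply: sigma_algebraCD; exact: sigma_algebra0.
Qed.

End Ext.

Section transfer.
Local Open Scope ereal_scope.
Context d1 d2 (X : measurableType d1) (Y : measurableType d2) (R : realType).
Variables (phi : X -> Y) (mphi : measurable_fun setT phi).
Variables (mu : {measure set X -> \bar R}).

Lemma int_push D (h : Y -> R) : measurable D -> measurable_fun setT h ->
  \int[pushforward mu phi]_(y in D) (EFin \o h) y =
  \int[mu]_(x in phi @^-1` D) ((EFin \o h) \o phi) x.
Proof.
move=> mD mh.
have mhE : measurable_fun D (EFin \o h).
  by apply/measurable_EFinP; exact: measurable_funTS.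
rewrite [RHS]integralE.
under [X in X - _]eq_integral do rewrite funepos_comp.
under [X in _ - X]eq_integral do rewrite funeneg_comp.
rewrite -[X in _ = X - _]ge0_integral_pushforward//; last first.
  exact/measurable_funepos.
rewrite -[X in _ = _ - X]ge0_integral_pushforward//; last first.
  exact/measurable_funeneg.
by rewrite [LHS]integralE.
Qed.
End transfer.
Theorem lemmaA2 (R : realType) (T N : nat) (HT : (0 < T)%N) (HN : (0 < N)%N)
  (Om : 'I_N -> 'I_T -> ptopologicalType)
  (Hpolish : forall (i : 'I_N) (t : 'I_T), polish R (Om i t))
  (P : forall i : 'I_N, probability (proc_space (Om i)) R)
  (dX : 'I_N -> measure_display) (S : forall i : 'I_N, measurableType (dX i))
  (X : forall (i : 'I_N) (t : 'I_T), proc_space (Om i) -> S i)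
  (Xadapted : forall (i : 'I_N) (t : 'I_T) (B : set (S i)), measurable B ->
      filt (Om i) t.+1 (X i t @^-1` B))
  (pi : probability (joint_space Om) R)
  (Hpi : cpl_mc P pi)
  (I : {set 'I_N}) (HI : exists i : 'I_N, i \in I) :
  exists nu : probability (joint_space (fun j : {i : 'I_N | i \in I} => Om (val j))) R,
    (forall A, measurable A -> nu A = pi (proj_sub Om I @^-1` A)) /\
    cpl_mc (fun j : {i : 'I_N | i \in I} => P (val j)) nu.
Proof.
pose p := proj_sub Om I.
have mp : measurable_fun setT p.
  move=> _ Y mY; rewrite setTI.
  move: Y mY; apply: sig_pre => S0 [j [A [hA ->]]].
  by apply: sub_sigma_algebra; exists (val j), A; split.
pose pm : {mfun joint_space Om >-> joint_space (fun j : {i : 'I_N | i \in I} => Om (val j))}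
  := HB.pack p (isMeasurableFun.Build _ _ _ _ _ mp).
exists (distribution pi pm); split; first by [].
case: Hpi => Hm Hc; split.
  by move=> j A mA; exact: (Hm (val j) A mA).
move=> t i Ht a b Ha Hb.
pose e := @extw T N Om I.
have Hu : forall s j, unitv i s j = unitv (val i) s (val j).
  by move=> s j; rewrite /unitv val_eqE.
have Ha' := @pre_p _ _ Om I (unitv i T) (unitv (val i) T) (Hu T) a Ha.
have Hb' := @pre_p _ _ Om I (fun _ => t) (fun _ => t) (fun _ => erefl) b Hb.
have [fa [fb [[mfa Ifa] [mfb Ifb] Iab]]] := Hc t (val i) Ht _ _ Ha' Hb'.
have inv : forall f : joint_space Om -> R,
    (forall Y : set R, measurable Y -> Fbar Om (unitv (val i) t) (f @^-1` Y)) ->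
    forall w, f (e (p w)) = f w.
  move=> f mf w.
  have := @Fbar_inv _ _ Om (val i) t _ (mf [set f w] (measurable_set1 _)) w (e (p w)).
  by move=> /(_ (esym (@extw_p T N Om I w i)) erefl) ->.
have mext : forall f : joint_space Om -> R,
    (forall Y : set R, measurable Y -> Fbar Om (unitv (val i) t) (f @^-1` Y)) ->
    forall Y : set R, measurable Y ->
      Fbar (fun j : {i : 'I_N | i \in I} => Om (val j)) (unitv i t) ((f \o e) @^-1` Y).
  move=> f mf Y mY.
  exact: (@pre_ext _ _ Om I (unitv i t) (unitv (val i) t) (Hu t) _ (mf Y mY)).
have hmeas : forall S0, Fbar (fun j : {i : 'I_N | i \in I} => Om (val j)) (unitv i t) S0 ->
    measurable (S0 : set (joint_space (fun j : {i : 'I_N | i \in I} => Om (val j)))).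
  apply: Fbar_meas => j; rewrite /unitv; case: ifP => // _.
  by case/andP: Ht.
have mfun : forall f : joint_space (fun j : {i : 'I_N | i \in I} => Om (val j)) -> R,
    (forall Y : set R, measurable Y -> Fbar (fun j : {i : 'I_N | i \in I} => Om (val j)) (unitv i t) (f @^-1` Y)) ->
    measurable_fun setT f.
  by move=> f mf _ Y mY; rewrite setTI; exact: hmeas _ (mf Y mY).
exists (fa \o e), (fb \o e); split.
- split; first exact: mext fa mfa.
  move=> g Hg.
  have Hg' := @pre_p _ _ Om I (unitv i t) (unitv (val i) t) (Hu t) g Hg.
  have E := @int_push _ _ _ _ R p mp pi g (fa \o e) (hmeas g Hg) (mfun _ (mext _ mfa)).
  apply: (eq_trans E); rewrite -[RHS]/(pi (p @^-1` a `&` p @^-1` g)) -(Ifa _ Hg').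
  by apply: eq_integral => x _ /=; rewrite (inv fa mfa).
- split; first exact: mext fb mfb.
  move=> g Hg.
  have Hg' := @pre_p _ _ Om I (unitv i t) (unitv (val i) t) (Hu t) g Hg.
  have E := @int_push _ _ _ _ R p mp pi g (fb \o e) (hmeas g Hg) (mfun _ (mext _ mfb)).
  apply: (eq_trans E); rewrite -[RHS]/(pi (p @^-1` b `&` p @^-1` g)) -(Ifb _ Hg').
  by apply: eq_integral => x _ /=; rewrite (inv fb mfb).
- move=> g Hg.
  have Hg' := @pre_p _ _ Om I (unitv i t) (unitv (val i) t) (Hu t) g Hg.
  have mM := measurable_funM (mfun _ (mext _ mfa)) (mfun _ (mext _ mfb)).
  have E := @int_push _ _ _ _ R p mp pi g (fun x => (fa \o e) x * (fb \o e) x) (hmeas g Hg) mM.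
  apply: (eq_trans E).
  rewrite -[RHS]/(pi (p @^-1` a `&` p @^-1` b `&` p @^-1` g)) -(Iab _ Hg').
  by apply: eq_integral => x _ /=; rewrite (inv fa mfa) (inv fb mfb).
Qed.
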